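(* Let $\mathcal{P}_t=\{0=s_0<s_1<\dots<s_{N_t}=t\}$, let $\mathbf{Y}_{s_0},\dots,\mathbf{Y}_{s_{N_t}}\in\mathbb{R}^d$, and define forward differences by $\hat{D}^0\mathbf{Y}_{s_n}=\mathbf{Y}_{s_n}$ and $\hat{D}^k\mathbf{Y}_{s_n}=(\hat{D}^{k-1}\mathbf{Y}_{s_{n+1}}-\hat{D}^{k-1}\mathbf{Y}_{s_n})/(s_{n+1}-s_n)$. Then for $k\in\{1,\dots,p-1\}$ and $n\in\{0,\dots,N_t-k\}$, $$\hat{D}^k\mathbf{Y}_{s_n}=\sum_{i=1}^k(-1)^{k+i}\sum_{\substack{n_1,\dots,n_i\ge1\\ n_1+\dots+n_i=k}}(s_{n+1}-s_n)^{-n_1}\cdots(s_{n+i}-s_{n+i-1})^{-n_i}\,(\mathbf{Y}_{s_{n+i}}-\mathbf{Y}_{s_{n+i-1}}).$$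
   Context: $p\ge2$ is an integer; the $n_j$ range over positive integers. *)

(* Defs.v *)
From HB Require Import structures.
From mathcomp Require Import all_boot all_order all_algebra.
Set Implicit Arguments. Unset Strict Implicit. Unset Printing Implicit Defensive.
Import Order.TTheory GRing.Theory Num.Theory.
Local Open Scope ring_scope.

Fixpoint Dhat (R : realFieldType) (d : nat) (s : nat -> R) (Y : nat -> 'rV[R]_d)
    (k n : nat) {struct k} : 'rV[R]_d :=
  match k with
  | 0 => Y n
  | k'.+1 => (s n.+1 - s n)^-1 *: (Dhat s Y k' n.+1 - Dhat s Y k' n)
  end.

(* c : 'I_i -> 'I_k.+1 encodes (n_1,...,n_i) as a composition of k into i
   positive parts. *)
Definition is_composition (k i : nat) (c : {ffun 'I_i -> 'I_k.+1}) : bool :=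
  [forall j, (0 < c j)%N] && ((\sum_(j < i) (c j : nat))%N == k).

(* Main.v *)
Require Import Defs.
From HB Require Import structures.
From mathcomp Require Import all_boot all_order all_algebra.
From mathcomp Require Import zify ring lra.
Set Implicit Arguments. Unset Strict Implicit. Unset Printing Implicit Defensive.
Import Order.TTheory GRing.Theory Num.Theory.
Local Open Scope ring_scope.

Section Aux.
Variable R : comPzRingType.

Definition fcons (T : Type) (i : nat) (a : T) (g : {ffun 'I_i -> T}) : {ffun 'I_i.+1 -> T} :=
  [ffun j : 'I_i.+1 => if unlift ord0 j is Some j' then g j' else a].

Lemma fcons0 T i a (g : {ffun 'I_i -> T}) : fcons a g ord0 = a.
Proof. by rewrite ffunE unlift_none. Qed.

Lemma fconsS T i a (g : {ffun 'I_i -> T}) j : fcons a g (lift ord0 j) = g j.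
Proof. by rewrite ffunE liftK. Qed.

Lemma big_ffun_cons (T : finType) (i : nat) (F : {ffun 'I_i.+1 -> T} -> R) :
  \sum_(f : {ffun 'I_i.+1 -> T}) F f =
  \sum_(a : T) \sum_(g : {ffun 'I_i -> T}) F (fcons a g).
Proof.
rewrite pair_big /=.
rewrite (reindex (fun p : T * {ffun 'I_i -> T} => fcons p.1 p.2)) //=.
exists (fun f : {ffun 'I_i.+1 -> T} => (f ord0, [ffun j => f (lift ord0 j)])).
  move=> [a g] _ /=; rewrite fcons0; congr (_, _); apply/ffunP => j.
  by rewrite ffunE fconsS.
move=> f _ /=; apply/ffunP => j; rewrite ffunE.
by case: unliftP => [j'|] ->; rewrite ?ffunE.
Qed.

Definition cpred (M i k : nat) (c : {ffun 'I_i -> 'I_M}) : bool :=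
  [forall j, (0 < c j)%N] && ((\sum_(j < i) (c j : nat))%N == k).

Definition SS (u : nat -> R) (M i k n : nat) : R :=
  \sum_(c : {ffun 'I_i -> 'I_M} | cpred k c) \prod_(j < i) u (n + j)%N ^+ c j.

Lemma SS_rec u M i k n :
  SS u M i.+1 k n =
  \sum_(a : 'I_M | (0 < a)%N && (a <= k)%N) u n ^+ a * SS u M i (k - a) n.+1.
Proof.
rewrite /SS big_mkcond /= big_ffun_cons [RHS]big_mkcond /=.
apply: eq_bigr => a _.
rewrite [in RHS]big_mkcond mulr_sumr.
case: ifP => Ha; last first.
  apply: big1 => g _; rewrite /cpred big_ord_recl fcons0.
  case: forallP => [H|]; last by [].
  have a0 : (0 < a)%N by have := H ord0; rewrite fcons0.
  move: Ha; rewrite a0 /=; move/negbT; rewrite -ltnNge => Hk.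
  case: eqP => // Hs; exfalso; move: Hk; rewrite -Hs; by rewrite ltnNge leq_addr.
move/andP: Ha => [a0 ak].
apply: eq_bigr => g _.
have -> : cpred k (fcons a g) = cpred (k - a) g.
  rewrite /cpred big_ord_recl fcons0.
  under eq_bigr do rewrite fconsS.
  congr andb.
    apply/forallP/forallP => H j.
      by have := H (lift ord0 j); rewrite fconsS.
    by case: (unliftP ord0 j) => [j'|] ->; rewrite ?fconsS ?fcons0.
  by apply/eqP/eqP => [<-|->]; [rewrite addKn | rewrite subnKC].
case: ifP => _; last by rewrite mulr0.
rewrite big_ord_recl fcons0 addn0; congr (_ * _).
by apply: eq_bigr => j _; rewrite fconsS /= addSnnS.
Qed.
Fixpoint Cf (u : nat -> R) (i k n : nat) : R :=
  match i with
  | 0 => (k == 0%N)%:R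
  | i'.+1 => \sum_(a < k.+1 | (0 < a)%N) u n ^+ a * Cf u i' (k - a) n.+1
  end.

Lemma SS_Cf u M i : forall k n, (k < M)%N -> SS u M i k n = Cf u i k n.
Proof.
elim: i => [|i IH] k n kM.
  rewrite /SS /=.
  pose c0 : {ffun 'I_0 -> 'I_M} := [ffun j => Ordinal kM].
  have H0 (c : {ffun 'I_0 -> 'I_M}) : c = c0 by apply/ffunP => -[].
  rewrite big_mkcond (bigD1 c0) //= [X in _ + X]big1 ?addr0; last first.
    by move=> c; rewrite (H0 c) eqxx.
  rewrite big_ord0 /cpred big_ord0.
  have -> : [forall j, (0 < c0 j)%N] by apply/forallP => -[].
  by rewrite /= eq_sym; case: (k == 0%N).
rewrite SS_rec /=.
rewrite (big_ord_widen_cond M (fun a => (0 < a)%N) (fun a => u n ^+ a * Cf u i (k - a) n.+1) kM).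
apply: eq_big => [a|a /andP[a0 ak]]; first by rewrite ltnS.
by rewrite IH // (leq_ltn_trans (leq_subr _ _) kM).
Qed.

Lemma Cf_rec u i k n :
  Cf u i.+1 k.+1 n = u n * (Cf u i k n.+1 + Cf u i.+1 k n).
Proof.
rewrite /= big_mkcond big_ord_recl /= add0r.
have b0 (m : nat) : bump 0 m = m.+1 by [].
under eq_bigr do rewrite b0 subSS.
rewrite big_ord_recl /= expr1 subn0 mulrDr; congr (_ + _).
rewrite [in RHS]big_mkcond [in RHS]big_ord_recl /= add0r big_distrr /=.
by apply: eq_bigr => j _; rewrite exprS mulrA.
Qed.

Lemma Cf_small u i : forall k n, (k < i)%N -> Cf u i k n = 0.
Proof.
elim: i => [|i IH] k n //= ki.
apply: big1 => a a0; rewrite IH ?mulr0 //.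
case: a a0 => a /= ak a0; lia.
Qed.
Lemma Cf0S u k n : Cf u 0 k.+1 n = 0. Proof. by []. Qed.
Lemma Cf11 u n : Cf u 1 1 n = u n.
Proof. by rewrite /= big_mkcond !big_ord_recl big_ord0 /= expr1 mulr1 addr0 add0r. Qed.
End Aux.
Arguments Cf : simpl never.

Section Main.
Variable R : realFieldType.
Variable d : nat.
Variable s : nat -> R.
Variable Y : nat -> 'rV[R]_d.
Let u m := (s m.+1 - s m)^-1.
Let Dl m := Y m - Y m.-1.

Definition G k n := \sum_(i < k.+1) (-1) ^+ (k + i) *: (Cf u i.+1 k.+1 n *: Dl (n + i.+1)).

Lemma G_rec k n : G k.+1 n = u n *: (G k n.+1 - G k n).
Proof.
rewrite /G.
under eq_bigr do rewrite Cf_rec mulrDr scalerDl scalerDr.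
rewrite big_split /= scalerBr; congr (_ + _).
  rewrite big_ord_recl Cf0S mulr0 !scale0r scaler0 add0r scaler_sumr.
  apply: eq_bigr => j _; rewrite lift0 /= addSnnS !addnS !exprS !mulN1r opprK.
  by rewrite !scalerA mulrA [(-1) ^+ _ * _]mulrC.
rewrite big_ord_recr /= Cf_small ?ltnSn // mulr0 !scale0r scaler0 addr0 scaler_sumr -sumrN.
apply: eq_bigr => j _ /=; rewrite addSn exprS mulN1r.
rewrite !scalerA -scaleNr; congr (_ *: _); ring.
Qed.

Lemma Dhat_G k : forall n, Dhat s Y k.+1 n = G k n.
Proof.
elim: k => [|k IH] n.
  rewrite /G big_ord1 /= expr0 scale1r /Dl addn1 /=.
  by rewrite Cf11.
by rewrite G_rec -!IH.
Qed.
End Main.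

Lemma sum_shift1 (V : zmodType) m (F : nat -> V) :
  \sum_(1 <= i < m.+1) F i = \sum_(i < m) F i.+1.
Proof.
rewrite -(big_mkord xpredT (fun i => F i.+1)).
rewrite (big_addn 0 m.+1 1) subn1 /=.
by apply: eq_bigr => i _; rewrite addn1.
Qed.

Theorem lemma7 (R : realFieldType) (d p N : nat) (t : R)
  (s : nat -> R) (Y : nat -> 'rV[R]_d)
  (hp : (2 <= p)%N)
  (hs0 : s 0%N = 0) (hsN : s N = t)
  (hinc : forall m : nat, (m < N)%N -> s m < s m.+1)
  (k n : nat) (hk1 : (1 <= k)%N) (hk2 : (k <= p - 1)%N) (hn : (n <= N - k)%N) :
  Dhat s Y k n =
  \sum_(1 <= i < k.+1)
    (-1) ^+ (k + i) *:
    \sum_(c : {ffun 'I_i -> 'I_k.+1} | is_composition c)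
      ((\prod_(j < i) (s (n + j.+1)%N - s (n + j)%N) ^- (c j : nat)) *:
         (Y (n + i)%N - Y (n + i).-1)).
Proof.
case: k hk1 hk2 hn => [//|k] _ _ _.
rewrite Dhat_G /G sum_shift1.
apply: eq_bigr => i _.
have sg (a b : nat) : (-1 : R) ^+ (a.+1 + b.+1) = (-1) ^+ (a + b).
  by rewrite addSn addnS !exprS !mulN1r opprK.
rewrite sg; congr (_ *: _).
rewrite -scaler_suml; congr (_ *: _).
rewrite -(@SS_Cf _ _ k.+2) //.
apply: eq_bigr => c _; apply: eq_bigr => j _.
by rewrite addnS exprVn.
Qed.
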